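(* Let $\mathcal{A}\in\mathbb{R}^{n\times n\times n}$ and $\mathcal{E}\in\mathbb{R}^{n\times n\times n}$ be such that $\mathcal{A}$ and $\tilde{\mathcal{A}}=\mathcal{A}+\mathcal{E}$ are piezoelectric-type tensors. Let $E=\big(\mathcal{E}(1,:,:),\ \cdots,\ \mathcal{E}(n,:,:)\big)$ be the block matrix whose $i$-th block is the $n\times n$ matrix $\mathcal{E}(i,:,:)$. Then $$\lambda_{C\max}(\mathcal{A})-\|E\|_2\le \lambda_{C\max}(\tilde{\mathcal{A}})\le \lambda_{C\max}(\mathcal{A})+\|E\|_2.$$
   Context: A tensor $\mathcal{A}=(a_{ijk})\in\mathbb{R}^{n\times n\times n}$ is piezoelectric-type if $a_{ijk}=a_{ikj}$ for all $i,j,k$. For $i\in\{1,\dots,n\}$, $\mathcal{E}(i,:,:)$ denotes the $n\times n$ (symmetric) matrix whose $(j,k)$ entry is $\varepsilon_{ijk}$, where $\mathcal{E}=(\varepsilon_{ijk})$. $\|\cdot\|_2$ is the matrix spectral norm (largest singular value). For a piezoelectric-type tensor $\mathcal{A}$, $\lambda_{C\max}(\mathcal{A})=\max\{\sum_{i,j,k}a_{ijk}x_iy_jy_k:\ \mathbf{x},\mathbf{y}\in\mathbb{R}^n,\ \mathbf{x}^T\mathbf{x}=1,\ \mathbf{y}^T\mathbf{y}=1\}$, which is the largest $C$-eigenvalue of $\mathcal{A}$ (a $C$-eigenvalue being a real $\lambda$ with unit $\mathbf{x},\mathbf{y}$ satisfying $\sum_{j,k}a_{ijk}y_jy_k=\lambda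 x_i$ and $\sum_{j,k}a_{jki}x_jy_k=\lambda y_i$ for all $i$). *)

(* Defs.v *)
From HB Require Import structures.
From mathcomp Require Import all_boot all_order all_algebra.
From mathcomp Require Import boolp classical_sets reals.
Set Implicit Arguments. Unset Strict Implicit. Unset Printing Implicit Defensive.
Import Order.TTheory GRing.Theory Num.Theory.
Local Open Scope ring_scope.
Local Open Scope classical_set_scope.

Definition tensor3 (R : realType) (n : nat) := 'I_n -> 'I_n -> 'I_n -> R.

Definition tadd (R : realType) (n : nat) (A E : tensor3 R n) : tensor3 R n :=
  fun i j k => A i j k + E i j k.

Definition piezo_type (R : realType) (n : nat) (A : tensor3 R n) : Prop :=
  forall i j k, A i j k = A i k j.

Definition Axyy (R : realType) (n : nat) (A : tensor3 R n) (x y : 'I_n -> R) : R :=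
  \sum_(i < n) \sum_(j < n) \sum_(k < n) A i j k * x i * y j * y k.

Definition lambdaCmax (R : realType) (n : nat) (A : tensor3 R n) : R :=
  sup [set v | exists x y : 'I_n -> R,
        \sum_(i < n) x i ^+ 2 = 1 /\ \sum_(i < n) y i ^+ 2 = 1 /\ v = Axyy A x y].

(* The n x n^2 block matrix E = (E(1,:,:), ..., E(n,:,:)): row j of block i
   is eps(i,j,:), placed at columns mxvec_index i k. *)
Definition block_unfold (R : realType) (n : nat) (E : tensor3 R n) : 'M[R]_(n, n * n) :=
  \matrix_(j < n) mxvec (\matrix_(i < n, k < n) E i j k).

Definition spec_norm (R : realType) (p q : nat) (M : 'M[R]_(p, q)) : R :=
  sup [set v | exists u : 'cV[R]_q,
        \sum_(c < q) u c 0 ^+ 2 = 1 /\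
        v = Num.sqrt (\sum_(r < p) (M *m u) r 0 ^+ 2)].

(* Main.v *)
Require Import Defs.
From mathcomp Require Import all_boot all_order all_algebra.
From mathcomp Require Import boolp classical_sets reals.
From mathcomp Require Import ring lra.
Import Order.TTheory GRing.Theory Num.Theory.
Local Open Scope ring_scope.

Section Helpers.
Variable R : realType.

Lemma sum_vec n (F : 'I_(n * n) -> R) :
  \sum_c F c = \sum_(i < n) \sum_(k < n) F (mxvec_index i k).
Proof.
rewrite pair_big (reindex _ (curry_mxvec_bij n n)) /=.
by apply: eq_bigr => -[i k].
Qed.

Arguments sum_vec {n}.

Lemma unit_le1 n (x : 'I_n -> R) : \sum_i x i ^+ 2 = 1 -> forall i, `|x i| <= 1.
Proof.
move=> hx i.
have h : x i ^+ 2 <= 1.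
  rewrite -hx (bigD1 i) //= lerDl sumr_ge0 // => j _; exact: sqr_ge0.
rewrite ler_norml; apply/andP; split; nra.
Qed.

Arguments unit_le1 {n x}.

Lemma cs n (y w : 'I_n -> R) : \sum_j y j ^+ 2 = 1 ->
  \sum_j y j * w j <= Num.sqrt (\sum_j w j ^+ 2).
Proof.
move=> hy.
set Q := \sum_j w j ^+ 2.
have Q0 : 0 <= Q by apply: sumr_ge0 => j _; exact: sqr_ge0.
case: (eqVneq Q 0) => [HQ|HQ].
  have wz : forall j, w j = 0.
    move=> j; apply/eqP; rewrite -sqrf_eq0; apply/eqP.
    exact: (psumr_eq0P (fun i _ => sqr_ge0 (w i)) HQ).
  rewrite big1 ?sqrtr_ge0 // => j _; by rewrite wz mulr0.
set N := Num.sqrt Q.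
have Np : 0 < N by rewrite sqrtr_gt0 lt_def HQ Q0.
have NN : N ^+ 2 = Q by rewrite sqr_sqrtr.
have N0 : N != 0 by rewrite gt_eqF.
have key : forall j, 2 * (y j * w j) <= N * (y j ^+ 2) + (w j ^+ 2) / N.
  move=> j.
  have h1 : 0 <= (N * y j - w j) ^+ 2 / N.
    by rewrite mulr_ge0 ?sqr_ge0 // invr_ge0 ltW.
  have h2 : (N * y j - w j) ^+ 2 / N = N * y j ^+ 2 - 2 * (y j * w j) + w j ^+ 2 / N.
    by field.
  lra.
have : \sum_j 2 * (y j * w j) <= \sum_j (N * (y j ^+ 2) + (w j ^+ 2) / N).
  by apply: ler_sum => j _; exact: key.
rewrite -mulr_sumr big_split /= -mulr_sumr -mulr_suml hy -/Q -NN.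
have -> : N ^+ 2 / N = N by field.
lra.
Qed.

Arguments cs {n y w}.

Lemma spec_bound p q (M : 'M[R]_(p, q)) (u : 'cV[R]_q) :
  \sum_(c < q) u c 0 ^+ 2 = 1 ->
  Num.sqrt (\sum_(r < p) (M *m u) r 0 ^+ 2) <=
  Num.sqrt (\sum_(r < p) (\sum_(c < q) `|M r c|) ^+ 2).
Proof.
move=> hu; rewrite ler_sqrt; last first.
  by apply: sumr_ge0 => r _; exact: sqr_ge0.
apply: ler_sum => r _.
have hb : `|(M *m u) r 0| <= \sum_(c < q) `|M r c|.
  rewrite mxE; apply: le_trans (ler_norm_sum _ _ _) _.
  apply: ler_sum => c _; rewrite normrM.
  have := @unit_le1 q (fun c => u c 0) hu c.
  have := normr_ge0 (M r c); have := normr_ge0 (u c 0); nra.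
move: hb; rewrite ler_norml => /andP [h1 h2]; nra.
Qed.

Arguments spec_bound {p q}.

Lemma spec_ub p q (M : 'M[R]_(p, q)) :
  has_ubound [set v | exists u : 'cV[R]_q,
        \sum_(c < q) u c 0 ^+ 2 = 1 /\
        v = Num.sqrt (\sum_(r < p) (M *m u) r 0 ^+ 2)].
Proof.
exists (Num.sqrt (\sum_(r < p) (\sum_(c < q) `|M r c|) ^+ 2)).
by move=> v [u [hu ->]]; exact: spec_bound.
Qed.

Arguments spec_ub {p q}.

Lemma spec_ge0 p q (M : 'M[R]_(p, q)) : 0 <= spec_norm M.
Proof.
rewrite /spec_norm.
set S := (X in sup X).
have [[v Sv]|ne] := pselect (exists v, S v).
  have h : v <= sup S by exact: (ub_le_sup (spec_ub M) Sv).
  apply: le_trans h.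
  by case: Sv => u [_ ->]; exact: sqrtr_ge0.
have -> : S = set0.
  by apply/seteqP; split => v // Sv; exfalso; apply: ne; exists v.
by rewrite sup0.
Qed.

Lemma Axyy_bound n (A : tensor3 R n) x y :
  \sum_i x i ^+ 2 = 1 -> \sum_i y i ^+ 2 = 1 ->
  Axyy A x y <= \sum_(i < n) \sum_(j < n) \sum_(k < n) `|A i j k|.
Proof.
move=> hx hy; apply: ler_sum => i _; apply: ler_sum => j _; apply: ler_sum => k _.
apply: le_trans (ler_norm _) _.
rewrite !normrM.
have := unit_le1 hx i; have := unit_le1 hy j; have := unit_le1 hy k.
have := normr_ge0 (A i j k); have := normr_ge0 (x i);
have := normr_ge0 (y j); have := normr_ge0 (y k).
set a := `|A i j k|; set b := `|x i|; set c := `|y j|; set d := `|y k|.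
move=> *.
have h1 : b * c * d <= 1.
  have : b * c <= 1 by nra.
  nra.
nra.
Qed.

Arguments Axyy_bound {n}.

Lemma lam_ub n (A : tensor3 R n) :
  has_ubound [set v | exists x y : 'I_n -> R,
        \sum_(i < n) x i ^+ 2 = 1 /\ \sum_(i < n) y i ^+ 2 = 1 /\ v = Axyy A x y].
Proof.
exists (\sum_(i < n) \sum_(j < n) \sum_(k < n) `|A i j k|).
by move=> v [x [y [hx [hy ->]]]]; exact: Axyy_bound.
Qed.

Lemma Axyy_add n (A E : tensor3 R n) x y :
  Axyy (tadd A E) x y = Axyy A x y + Axyy E x y.
Proof.
rewrite /Axyy -big_split; apply: eq_bigr => i _.
rewrite -big_split; apply: eq_bigr => j _.
rewrite -big_split; apply: eq_bigr => k _.
rewrite /tadd /=; ring.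
Qed.

Lemma Axyy_N n (E : tensor3 R n) x y :
  Axyy E (fun i => - x i) y = - Axyy E x y.
Proof.
rewrite /Axyy -sumrN; apply: eq_bigr => i _.
rewrite -sumrN; apply: eq_bigr => j _.
rewrite -sumrN; apply: eq_bigr => k _.
ring.
Qed.

Arguments lam_ub {n}.
Arguments Axyy_add {n}.
Arguments Axyy_N {n}.

Lemma key n (E : tensor3 R n) x y :
  \sum_i x i ^+ 2 = 1 -> \sum_i y i ^+ 2 = 1 ->
  Axyy E x y <= spec_norm (block_unfold E).
Proof.
move=> hx hy.
set X := \matrix_(i < n, k < n) (x i * y k).
set u : 'cV[R]_(n * n) := (mxvec X)^T.
have hu : \sum_(c < n * n) u c 0 ^+ 2 = 1.
  rewrite (sum_vec (fun c => u c 0 ^+ 2)).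
  under eq_bigr => i _ do under eq_bigr => k _ do rewrite mxE mxvecE mxE exprMn.
  under eq_bigr => i _ do rewrite -mulr_sumr hy mulr1.
  exact: hx.
have hMu : forall j, (block_unfold E *m u) j 0 =
    \sum_(i < n) \sum_(k < n) E i j k * (x i * y k).
  move=> j; rewrite mxE.
  rewrite (sum_vec (fun c => block_unfold E j c * u c 0)).
  apply: eq_bigr => i _; apply: eq_bigr => k _.
  by rewrite !mxE mxvecE mxE mxvecE !mxE.
have -> : Axyy E x y =
    \sum_(j < n) y j * (block_unfold E *m u) j 0.
  rewrite /Axyy exchange_big /=; apply: eq_bigr => j _.
  rewrite hMu mulr_sumr; apply: eq_bigr => i _.
  rewrite mulr_sumr; apply: eq_bigr => k _; ring.
apply: le_trans (cs hy) _.
rewrite /spec_norm; apply: (ub_le_sup (spec_ub (block_unfold E))).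
by exists u.
Qed.

End Helpers.
Arguments sum_vec {R n}.
Arguments spec_ub {R p q}.
Arguments spec_ge0 {R p q}.
Arguments lam_ub {R n}.
Arguments key {R n}.
Arguments Axyy_add {R n}.
Arguments Axyy_N {R n}.


Theorem corollary2p1 (R : realType) (n : nat) (A E : tensor3 R n) :
  piezo_type A -> piezo_type (tadd A E) ->
  lambdaCmax A - spec_norm (block_unfold E) <= lambdaCmax (tadd A E) /\
  lambdaCmax (tadd A E) <= lambdaCmax A + spec_norm (block_unfold E).
Proof.
move=> _ _.
set s := spec_norm (block_unfold E).
have s0 : 0 <= s := spec_ge0 _.
have kE : forall x y : 'I_n -> R, \sum_i x i ^+ 2 = 1 -> \sum_i y i ^+ 2 = 1 ->
    Axyy E x y <= s /\ - Axyy E x y <= s.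
  move=> x y hx hy; split; first exact: key.
  rewrite -Axyy_N; apply: key => //.
  by under eq_bigr => i _ do rewrite sqrrN.
have [[x [y [hx hy]]]|ne] := pselect (exists x y : 'I_n -> R,
    \sum_i x i ^+ 2 = 1 /\ \sum_i y i ^+ 2 = 1); last first.
  have z : forall B : tensor3 R n, lambdaCmax B = 0.
    move=> B; rewrite /lambdaCmax -[RHS](@sup0 R); congr sup.
    apply/seteqP; split => v // [x [y [hx [hy _]]]]; exfalso; apply: ne; by exists x, y.
  rewrite !z; split; lra.
rewrite /lambdaCmax.
set ST := (X in _ <= sup X /\ _).
set SA := (X in sup X - _ <= _ /\ _).
  have neA : (SA !=set0)%classic by exists (Axyy A x y); exists x, y.
  have neT : (ST !=set0)%classic by exists (Axyy (tadd A E) x y); exists x, y.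
  split.
  - rewrite lerBlDr; apply: ge_sup neA _ => v [x' [y' [hx' [hy' ->]]]].
    have := ub_le_sup (lam_ub (tadd A E)) (ltac:(by exists x', y') : ST (Axyy (tadd A E) x' y')).
    rewrite Axyy_add; have := kE x' y' hx' hy'; lra.
  - apply: ge_sup neT _ => v [x' [y' [hx' [hy' ->]]]].
    have := ub_le_sup (lam_ub A) (ltac:(by exists x', y') : SA (Axyy A x' y')).
    rewrite Axyy_add; have := kE x' y' hx' hy'; lra.
Qed.
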